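(* Let $n\geq 4$ and let $L$ be a solvable Lie algebra over $\mathbb{K}\in\{\mathbb{C},\mathbb{R}\}$ with nilradical isomorphic to $T(n)$, and let $f=\dim L-\frac12n(n-1)$ be the number of nonnilpotent (linearly nilindependent) basis elements $X^1,\ldots,X^f$ complementing the nilradical. The maximal possible value of $f$ is $n-1$.
   Context: $T(n)$ is the Lie algebra of strictly upper triangular $n\times n$ matrices over $\mathbb{K}$, of dimension $\frac12n(n-1)$. The nilradical of a solvable Lie algebra is its maximal nilpotent ideal. Elements are linearly nilindependent if no nontrivial linear combination of them is nilpotent (i.e. ad-nilpotent) in $L$. *)

(* Defs.v *)
(* Finite-dimensional Lie algebras over a field K, encoded
   concretely on the coordinate space 'rV[K]_m with a bracket. *)
From mathcomp Require Import all_boot all_algebra.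
From mathcomp Require Import reals complex.
Set Implicit Arguments. Unset Strict Implicit. Unset Printing Implicit Defensive.
Import GRing.Theory.
Local Open Scope ring_scope.

Section Lie.
Variable K : fieldType.

Definition is_lie_bracket (m : nat) (br : 'rV[K]_m -> 'rV[K]_m -> 'rV[K]_m) : Prop :=
  [/\ (forall (a : K) x y z, br (a *: x + y) z = a *: br x z + br y z),
      (forall (a : K) x y z, br z (a *: x + y) = a *: br z x + br z y),
      (forall x, br x x = 0) &
      (forall x y z, br x (br y z) + br y (br z x) + br z (br x y) = 0)].

(* Subspaces of K^m are row spaces of square matrices 'M_m (mxalgebra). *)
(* [A, B] : the subspace spanned by all brackets br u v, u in A, v in B
   (by bilinearity it suffices to take brackets of spanning rows). *)
Definition brk (m : nat) (br : 'rV[K]_m -> 'rV[K]_m -> 'rV[K]_m)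
    (A B : 'M[K]_m) : 'M[K]_m :=
  (\sum_(i < m) \sum_(j < m) <<br (row i A) (row j B)>>)%MS.

Definition is_ideal (m : nat) (br : 'rV[K]_m -> 'rV[K]_m -> 'rV[K]_m)
    (I : 'M[K]_m) : Prop :=
  forall x y : 'rV[K]_m, (y <= I)%MS -> (br x y <= I)%MS.

Definition derived (m : nat) br (A : 'M[K]_m) (k : nat) : 'M[K]_m :=
  iter k (fun X => brk br X X) A.

Definition lower_central (m : nat) br (A : 'M[K]_m) (k : nat) : 'M[K]_m :=
  iter k (fun X => brk br A X) A.

Definition lie_solvable (m : nat) br : Prop :=
  exists k, \rank (derived br (1%:M : 'M[K]_m) k) = 0%N.

Definition sub_nilpotent (m : nat) br (A : 'M[K]_m) : Prop :=
  exists k, \rank (lower_central br A k) = 0%N.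

Definition is_nilradical (m : nat) br (N : 'M[K]_m) : Prop :=
  [/\ is_ideal br N, sub_nilpotent br N &
      forall J : 'M[K]_m, is_ideal br J -> sub_nilpotent br J ->
        (N <= J)%MS -> (J <= N)%MS].

Definition strict_upper (n : nat) (A : 'M[K]_n) : Prop :=
  forall i j : 'I_n, (j <= i)%N -> A i j = 0.

Definition mx_comm (n : nat) (A B : 'M[K]_n) : 'M[K]_n := A *m B - B *m A.

Definition iso_to_T (n m : nat) br (N : 'M[K]_m) : Prop :=
  exists phi : 'M[K]_n -> 'rV[K]_m,
    [/\ (forall (a : K) A B, strict_upper A -> strict_upper B ->
           phi (a *: A + B) = a *: phi A + phi B),
        (forall A B, strict_upper A -> strict_upper B -> phi A = phi B -> A = B),
        (forall A, strict_upper A -> (phi A <= N)%MS),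
        (forall v, (v <= N)%MS -> exists2 A, strict_upper A & phi A = v) &
        (forall A B, strict_upper A -> strict_upper B ->
           phi (mx_comm A B) = br (phi A) (phi B))].

Definition max_f_statement (n : nat) : Prop :=
  (forall (m : nat) (br : 'rV[K]_m -> 'rV[K]_m -> 'rV[K]_m) (N : 'M[K]_m),
     is_lie_bracket br -> lie_solvable br -> is_nilradical br N ->
     iso_to_T n br N ->
     (m - (n * (n - 1)) %/ 2 <= n - 1)%N)
  /\
  (exists (m : nat) (br : 'rV[K]_m -> 'rV[K]_m -> 'rV[K]_m) (N : 'M[K]_m),
     [/\ is_lie_bracket br, lie_solvable br, is_nilradical br N,
         iso_to_T n br N & (m - (n * (n - 1)) %/ 2 = n - 1)%N]).

End Lie.

(* Main.v *)
Require Import Defs.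
From mathcomp Require Import all_boot all_algebra.
From mathcomp Require Import reals complex.
From mathcomp Require Import zify ring.
From Stdlib Require Import ClassicalEpsilon.
Set Implicit Arguments. Unset Strict Implicit. Unset Printing Implicit Defensive.
Import GRing.Theory.
Local Open Scope ring_scope.


Section Gen.
Variable K : fieldType.
Variable m : nat.

Definition linf (f : 'rV[K]_m -> 'rV[K]_m) :=
  forall (a : K) x y, f (a *: x + y) = a *: f x + f y.

Lemma linf0 f : linf f -> f 0 = 0.
Proof.
move=> H; have := H (-1) 0 0.
by rewrite scaler0 addr0 scaleN1r addNr.
Qed.

Lemma linfD f : linf f -> forall x y, f (x + y) = f x + f y.
Proof. by move=> H x y; have := H 1 x y; rewrite !scale1r. Qed.

Lemma linfZ f : linf f -> forall a x, f (a *: x) = a *: f x.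
Proof. by move=> H a x; have := H a x 0; rewrite !addr0 linf0 // addr0. Qed.

Lemma linf_sum f (I : Type) (r : seq I) (P : pred I) (F : I -> 'rV_m) :
  linf f -> f (\sum_(i <- r | P i) F i) = \sum_(i <- r | P i) f (F i).
Proof.
move=> H; apply: (big_morph f); [exact: linfD | exact: linf0].
Qed.

Lemma lin_sub f p (A : 'M[K]_(p, m)) (C : 'M[K]_m) : linf f ->
  (forall i, (f (row i A) <= C)%MS) -> forall u, (u <= A)%MS -> (f u <= C)%MS.
Proof.
move=> H HA u uA; rewrite -(mulmxKpV uA) mulmx_sum_row linf_sum //.
by apply: summx_sub => i _; rewrite linfZ // scalemx_sub.
Qed.

Definition Fm (f : 'rV[K]_m -> 'rV[K]_m) : 'M[K]_m := \matrix_(i < m) f (row i 1%:M).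

Lemma FmE f : linf f -> forall u, u *m Fm f = f u.
Proof.
move=> H u; rewrite mulmx_sum_row.
rewrite -{2}(mulmx1 u) mulmx_sum_row linf_sum //.
by apply: eq_bigr => i _; rewrite rowK linfZ.
Qed.

Lemma FmE_gen (q : nat) (f : 'rV[K]_m -> 'rV[K]_q) :
  (forall a x y, f (a *: x + y) = a *: f x + f y) ->
  forall u, u *m (\matrix_(i < m) f (row i 1%:M)) = f u.
Proof.
move=> H u.
have f0 : f 0 = 0 by have := H (-1) 0 0; rewrite scaler0 addr0 scaleN1r addNr.
have fD : forall x y, f (x + y) = f x + f y by move=> x y; have := H 1 x y; rewrite !scale1r.
have fZ : forall a x, f (a *: x) = a *: f x by move=> a x; have := H a x 0; rewrite !addr0 f0 addr0.
rewrite mulmx_sum_row -{2}(mulmx1 u) mulmx_sum_row.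
rewrite (big_morph f fD f0).
by apply: eq_bigr => i _; rewrite rowK fZ.
Qed.

Definition preim f (C : 'M[K]_m) : 'M[K]_m := kermx (Fm f *m cokermx C).

Lemma preimP f C u : linf f -> (u <= preim f C)%MS = (f u <= C)%MS.
Proof. by move=> H; rewrite sub_kermx mulmxA FmE // submxE. Qed.

Lemma preim_sub f p (A : 'M[K]_(p, m)) C : linf f ->
  (A <= preim f C)%MS -> forall u, (u <= A)%MS -> (f u <= C)%MS.
Proof. by move=> H hA u uA; rewrite -preimP //; exact: submx_trans hA. Qed.

Variable br : 'rV[K]_m -> 'rV[K]_m -> 'rV[K]_m.
Hypothesis Hbr : is_lie_bracket br.

Lemma br_linl v : linf (fun u => br u v).
Proof. by case: Hbr => H1 _ _ _ a x y; rewrite H1. Qed.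
Lemma br_linr u : linf (br u).
Proof. by case: Hbr => _ H2 _ _ a x y; rewrite H2. Qed.

Lemma br_anti x y : br x y = - br y x.
Proof.
case: Hbr => _ _ H3 _; apply/eqP; rewrite -subr_eq0 opprK.
have := H3 (x + y); rewrite (linfD (br_linl _)) !(linfD (br_linr _)) !H3.
by rewrite add0r addr0 => ->.
Qed.

Lemma br_jac x y z : br x (br y z) + br y (br z x) + br z (br x y) = 0.
Proof. by case: Hbr => _ _ _ ->. Qed.

Lemma br_oppr u w : br u (- w) = - br u w.
Proof. by rewrite -scaleN1r (linfZ (br_linr u)) scaleN1r. Qed.

Lemma brk_in (A B : 'M[K]_m) u v : (u <= A)%MS -> (v <= B)%MS ->
  (br u v <= brk br A B)%MS.
Proof.
move=> uA vB.
have Hr : forall i, (br (row i A) v <= brk br A B)%MS.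
  move=> i; apply: (lin_sub (br_linr _)) vB => j.
  apply: (sumsmx_sup i) => //; apply: (sumsmx_sup j) => //.
  by rewrite genmxE.
exact: (lin_sub (br_linl _)) uA.
Qed.

Lemma brk_sub (A B C : 'M[K]_m) :
  (forall u v, (u <= A)%MS -> (v <= B)%MS -> (br u v <= C)%MS) ->
  (brk br A B <= C)%MS.
Proof.
move=> H; apply/sumsmx_subP => i _; apply/sumsmx_subP => j _.
by rewrite genmxE; apply: H; rewrite row_sub.
Qed.

Lemma brk_mono (A B A' B' : 'M[K]_m) : (A <= A')%MS -> (B <= B')%MS ->
  (brk br A B <= brk br A' B')%MS.
Proof.
move=> h1 h2; apply: brk_sub => u v uA vB; apply: brk_in.
  exact: submx_trans h1.
exact: submx_trans h2.
Qed.

Lemma to_preim f p (A : 'M[K]_(p, m)) C : linf f ->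
  (forall u, (u <= A)%MS -> (f u <= C)%MS) -> (A <= preim f C)%MS.
Proof.
by move=> Hf H; apply/row_subP => i; rewrite preimP // H // row_sub.
Qed.

Lemma brk_ind f (A B C : 'M[K]_m) : linf f ->
  (forall u v, (u <= A)%MS -> (v <= B)%MS -> (f (br u v) <= C)%MS) ->
  forall y, (y <= brk br A B)%MS -> (f y <= C)%MS.
Proof.
move=> Hf H; apply: preim_sub => //; apply: brk_sub => u v uA vB.
by rewrite preimP //; apply: H.
Qed.

Lemma br_der x u v : br x (br u v) = br u (br x v) + br (br x u) v.
Proof.
have := br_jac x u v; rewrite (br_anti v x) br_oppr (br_anti v (br x u)).
move/eqP; rewrite -subr_eq0 subr0 => /eqP h.
by apply/eqP; rewrite -subr_eq0 opprD addrA h.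
Qed.

Lemma ideal_brk (I : 'M[K]_m) : is_ideal br I -> is_ideal br (brk br I I).
Proof.
move=> HI x; apply: (brk_ind (br_linr x)) => u v uI vI.
have -> : br x (br u v) = br u (br x v) + br (br x u) v.
  have := br_jac x u v; rewrite (br_anti v x) br_oppr (br_anti v (br x u)).
  move/eqP; rewrite -subr_eq0 subr0 => /eqP h.
  by apply/eqP; rewrite -subr_eq0 opprD addrA h.
by rewrite addmx_sub // brk_in // HI.
Qed.

Lemma ideal_brk_sub (I : 'M[K]_m) : is_ideal br I -> (brk br I I <= I)%MS.
Proof. by move=> HI; apply: brk_sub => u v _ vI; apply: HI. Qed.

Lemma ideal_adds (I J : 'M[K]_m) : is_ideal br I -> is_ideal br J -> is_ideal br (I + J)%MS.
Proof.
move=> HI HJ x; apply: preim_sub (br_linr x) _.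
rewrite addsmx_sub; apply/andP; split; apply: to_preim (br_linr x) _ => u uI.
  by apply: submx_trans (addsmxSl I J); exact: HI.
by apply: submx_trans (addsmxSr I J); exact: HJ.
Qed.

End Gen.


Section Tn.
Variable K : fieldType.
Variable p : nat.
Local Notation n := p.+1.
Local Notation M := 'M[K]_n.

Definition tk (k : nat) (A : M) := forall i j : 'I_n, (j < i + k)%N -> A i j = 0.

Lemma tk1P A : strict_upper A <-> tk 1 A.
Proof.
split=> H i j h; apply: H; lia.
Qed.

Lemma tkW k l A : (k <= l)%N -> tk l A -> tk k A.
Proof. by move=> hk H i j h; apply: H; lia. Qed.

Lemma tk0 k : tk k 0.
Proof. by move=> i j _; rewrite mxE. Qed.

Lemma tkD k A B : tk k A -> tk k B -> tk k (A + B).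
Proof. by move=> hA hB i j h; rewrite mxE hA // hB // addr0. Qed.

Lemma tkZ k c A : tk k A -> tk k (c *: A).
Proof. by move=> hA i j h; rewrite mxE hA // mulr0. Qed.

Lemma tkN k A : tk k A -> tk k (- A).
Proof. by move=> hA i j h; rewrite mxE hA // oppr0. Qed.

Lemma tkB k A B : tk k A -> tk k B -> tk k (A - B).
Proof. by move=> hA hB; apply: tkD => //; apply: tkN. Qed.

Lemma tk_sum k (I : Type) (r : seq I) (P : pred I) (F : I -> M) :
  (forall i, P i -> tk k (F i)) -> tk k (\sum_(i <- r | P i) F i).
Proof.
move=> H; elim/big_rec: _ => [|i x Pi hx]; first exact: tk0.
by apply: tkD => //; apply: H.
Qed.

Lemma tk_mul k l A B : tk k A -> tk l B -> tk (k + l) (A *m B).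
Proof.
move=> hA hB i j h; rewrite mxE big1 // => r _.
case: (ltnP r (i + k)) => h1; first by rewrite hA // mul0r.
by rewrite hB ?mulr0 //; lia.
Qed.

Lemma tk_comm k l A B : tk k A -> tk l B -> tk (k + l) (mx_comm A B).
Proof.
move=> hA hB; apply: tkB; first exact: tk_mul.
by rewrite addnC; apply: tk_mul.
Qed.

Definition E (a b : nat) : M := delta_mx (inord a) (inord b).

Lemma inord_eq (r a : nat) : (r <= p)%N -> (a <= p)%N ->
  ((inord r : 'I_n) == inord a) = (r == a).
Proof.
move=> hr ha; apply/eqP/eqP => [h|->] //.
by have := congr1 (@nat_of_ord _) h; rewrite !inordK.
Qed.

Lemma tkE k a b : (a + k <= b <= p)%N -> tk k (E a b).
Proof.
move=> /andP [h1 h2] i j h; rewrite mxE.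
case: eqP => // hi; case: eqP => //= hj; exfalso.
move: h; rewrite hi hj !inordK; lia.
Qed.

Lemma delta_mulr (X : M) (a b : 'I_n) r c :
  (X *m delta_mx a b) r c = (if c == b then X r a else 0).
Proof.
rewrite mxE (bigD1 a) //= big1 ?addr0 => [|l hl]; last first.
  by rewrite mxE (negbTE hl) mulr0.
by rewrite mxE eqxx /=; case: (c == b); rewrite ?mulr1 ?mulr0.
Qed.

Lemma delta_mull (X : M) (a b : 'I_n) r c :
  (delta_mx a b *m X) r c = (if r == a then X b c else 0).
Proof.
rewrite mxE (bigD1 b) //= big1 ?addr0 => [|l hl]; last first.
  by rewrite mxE (negbTE hl) andbF mul0r.
by rewrite mxE eqxx andbT; case: (r == a); rewrite ?mul1r ?mul0r.
Qed.

Lemma entD (A B : M) r c : (A + B) r c = A r c + B r c.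
Proof. by rewrite mxE. Qed.

Lemma entB (A B : M) r c : (A - B) r c = A r c - B r c.
Proof. by rewrite !mxE. Qed.

Lemma commEr X a b r c : (a <= p)%N -> (b <= p)%N -> (r <= p)%N -> (c <= p)%N ->
  mx_comm X (E a b) (inord r) (inord c) =
  (if c == b then X (inord r) (inord a) else 0) - (if r == a then X (inord b) (inord c) else 0).
Proof.
move=> ha hb hr hc.
by rewrite /mx_comm entB /E delta_mulr delta_mull !inord_eq.
Qed.

Lemma commEl Y a b r c : (a <= p)%N -> (b <= p)%N -> (r <= p)%N -> (c <= p)%N ->
  mx_comm (E a b) Y (inord r) (inord c) =
  (if r == a then Y (inord b) (inord c) else 0) - (if c == b then Y (inord r) (inord a) else 0).
Proof.
move=> ha hb hr hc.
by rewrite /mx_comm entB /E delta_mulr delta_mull !inord_eq.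
Qed.

Lemma EE_comm a b c d : (a <= p)%N -> (b <= p)%N -> (c <= p)%N -> (d <= p)%N ->
  b != c -> d != a -> mx_comm (E a b) (E c d) = 0.
Proof.
move=> ha hb hc hd h1 h2.
by rewrite /mx_comm /E !mul_delta_mx_0 ?subr0 // inord_eq.
Qed.

Lemma EE_prod a b c : (a <= p)%N -> (b <= p)%N -> (c <= p)%N -> c != a ->
  mx_comm (E a b) (E b c) = E a c.
Proof.
move=> ha hb hc h.
by rewrite /mx_comm /E mul_delta_mx mul_delta_mx_0 ?subr0 // inord_eq.
Qed.

Lemma ent0 (A B : M) r c : A + B = 0 -> A r c + B r c = 0.
Proof. by move=> h; rewrite -entD h mxE. Qed.

Definition is_der (D : M -> M) :=
 [/\ (forall c A B, tk 1 A -> tk 1 B -> D (c *: A + B) = c *: D A + D B),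
     (forall A, tk 1 A -> tk 1 (D A)) &
     (forall A B, tk 1 A -> tk 1 B -> D (mx_comm A B) = mx_comm (D A) B + mx_comm A (D B))].

Section Der.
Variable D : M -> M.
Hypothesis HD : is_der D.

Lemma der0 : D 0 = 0.
Proof.
case: HD => H _ _; have := H (-1) 0 0 (@tk0 1) (@tk0 1).
by rewrite scaler0 addr0 scaleN1r addNr.
Qed.

Lemma derZ c A : tk 1 A -> D (c *: A) = c *: D A.
Proof. by case: HD => H _ _ hA; have := H c A 0 hA (@tk0 1); rewrite !addr0 der0 addr0. Qed.

Lemma derD A B : tk 1 A -> tk 1 B -> D (A + B) = D A + D B.
Proof. by case: HD => H _ _ hA hB; have := H 1 A B hA hB; rewrite !scale1r. Qed.

Lemma der_sum (I : Type) (r : seq I) (P : pred I) (F : I -> M) :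
  (forall i, P i -> tk 1 (F i)) -> D (\sum_(i <- r | P i) F i) = \sum_(i <- r | P i) D (F i).
Proof.
move=> H.
suff: tk 1 (\sum_(i <- r | P i) F i) /\ D (\sum_(i <- r | P i) F i) = \sum_(i <- r | P i) D (F i) by case.
elim/big_rec2: _ => [|i y1 y2 Pi [h1 h2]]; first by split; [exact: tk0 | exact: der0].
split; first by apply: tkD => //; apply: H.
by rewrite derD ?h2 //; apply: H.
Qed.

Lemma der_rel a b c d : (a < b <= p)%N -> (c < d <= p)%N -> b != c -> d != a ->
  mx_comm (D (E a b)) (E c d) + mx_comm (E a b) (D (E c d)) = 0.
Proof.
move=> /andP[h1 h2] /andP[h3 h4] h5 h6; case: HD => _ _ H.
rewrite -H; [|apply: tkE; lia|apply: tkE; lia].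
rewrite EE_comm //; try lia; exact: der0.
Qed.

Lemma der_prod a b c : (a < b < c)%N -> (c <= p)%N ->
  D (E a c) = mx_comm (D (E a b)) (E b c) + mx_comm (E a b) (D (E b c)).
Proof.
move=> /andP[h1 h2] h3; case: HD => _ _ H.
rewrite -H; [|apply: tkE; lia|apply: tkE; lia].
rewrite EE_prod //; lia.
Qed.

Hypothesis p3 : (3 <= p)%N.
Hypothesis two : (2 : K) != 0.

Ltac sif := repeat match goal with
 | |- context [ (?a == ?b :> nat) ] =>
     first [ rewrite (_ : (a == b) = true); last by (apply/eqP; lia)
           | rewrite (_ : (a == b) = false); last by (apply/eqP; lia) ]
 end.

Lemma fin2 (x y c : K) : c != 0 -> y = 0 -> y = c * x -> x = 0.
Proof. by move=> hc h1 h2; move: h1; rewrite h2 => /eqP; rewrite mulf_eq0 (negbTE hc) => /eqP. Qed.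

Lemma der_super i k : (i < p)%N -> (k < p)%N -> k != i ->
  D (E i i.+1) (inord k) (inord k.+1) = 0.
Proof.
move=> hi hk hki.
case U: [&& (k.+2 <= p)%N, i != k.+1 & i != k.+2].
  move/and3P: U => [u1 u2 u3].
  have := ent0 (inord k) (inord k.+2) (@der_rel i i.+1 k.+1 k.+2 ltac:(lia) ltac:(lia) ltac:(lia) ltac:(lia)).
  rewrite commEr ?commEl; try lia; sif.
  move=> h; apply: (@fin2 _ _ 1 _ h); [exact: oner_neq0 | ring].
case: k hk hki U => [|k'] hk hki U.
  have [->|->] : i = 1%N \/ i = 2%N by move: U; case/boolP: (i == 1%N); lia.
    have := ent0 (inord 0) (inord 3) (@der_rel 1 2 1 3 ltac:(lia) ltac:(lia) ltac:(lia) ltac:(lia)).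
    rewrite commEr ?commEl; try lia; sif.
    move=> h; apply: (@fin2 _ _ 1 _ h); [exact: oner_neq0 | ring].
  have := ent0 (inord 0) (inord 3) (@der_rel 2 3 1 3 ltac:(lia) ltac:(lia) ltac:(lia) ltac:(lia)).
  rewrite commEr ?commEl; try lia; sif.
  rewrite (@der_prod 1 2 3); try lia; rewrite [(mx_comm _ _ + mx_comm _ _) _ _]entD.
  rewrite commEr ?commEl; try lia; sif.
  move=> h; apply: (@fin2 _ _ 2 _ h); [exact: two | ring].
case Dn: [&& i.+1 != k' & i != k'].
  move/andP: Dn => [d1 d2].
  have := ent0 (inord k') (inord k'.+2) (@der_rel i i.+1 k' k'.+1 ltac:(lia) ltac:(lia) ltac:(lia) ltac:(lia)).
  rewrite commEr ?commEl; try lia; sif.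
  move=> h; apply: (@fin2 _ _ (-1) _ h); [by rewrite oppr_eq0 oner_neq0 | ring].
have hp : p = k'.+2 by move: U Dn; case/boolP: (k'.+3 <= p)%N; lia.
case: k' hk hki U Dn hp => [|s] hk hki U Dn hp; first by lia.
have [->|->] : i = s.+1 \/ i = s by move: Dn; case/boolP: (i == s); lia.
  have := ent0 (inord s) (inord s.+3) (@der_rel s.+1 s.+2 s s.+2 ltac:(lia) ltac:(lia) ltac:(lia) ltac:(lia)).
  rewrite commEr ?commEl; try lia; sif.
  move=> h; apply: (@fin2 _ _ (-1) _ h); [by rewrite oppr_eq0 oner_neq0 | ring].
have := ent0 (inord s) (inord s.+3) (@der_rel s s.+1 s s.+2 ltac:(lia) ltac:(lia) ltac:(lia) ltac:(lia)).
rewrite commEr ?commEl; try lia; sif.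
rewrite (@der_prod s s.+1 s.+2); try lia; rewrite [(mx_comm _ _ + mx_comm _ _) _ _]entD.
rewrite commEr ?commEl; try lia; sif.
move=> h; apply: (@fin2 _ _ (-2) _ h); [by rewrite oppr_eq0 two | ring].
Qed.

Lemma der_tkE s : (1 <= s)%N -> (forall a, (a < p)%N -> tk s (D (E a a.+1))) ->
  forall a b, (a < b <= p)%N -> tk (b - a + s - 1) (D (E a b)).
Proof.
move=> hs Hs.
suff H : forall d a, (a + d.+1 <= p)%N -> tk (d + s) (D (E a (a + d.+1))).
  move=> a b /andP[h1 h2]; have := H (b - a.+1)%N a ltac:(lia).
  have -> : (a + (b - a.+1).+1 = b)%N by lia.
  apply: tkW; lia.
elim=> [|d IH] a h.
  by rewrite addn1 add0n; apply: Hs; lia.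
rewrite (@der_prod a a.+1 (a + d.+2)); try lia.
apply: tkD.
  have -> : (d.+1 + s = s + d.+1)%N by lia.
  by apply: tk_comm; [apply: Hs; lia | apply: tkE; lia].
have := IH a.+1 ltac:(lia); rewrite (_ : (a.+1 + d.+1 = a + d.+2)%N); last lia.
move=> h2; have -> : (d.+1 + s = 1 + (d + s))%N by lia.
by apply: tk_comm => //; apply: tkE; lia.
Qed.

Lemma tk_term k (A : M) (i j : 'I_n) : (1 <= k)%N -> tk k A -> tk 1 (A i j *: delta_mx i j).
Proof.
move=> hk hA; case: (ltnP j (i + k)) => h.
  by rewrite hA // scale0r; exact: tk0.
apply: tkZ; have -> : delta_mx i j = E i j by rewrite /E !inord_val.
apply: tkE; have := ltn_ord j; lia.
Qed.

Lemma der_tk s k A : (1 <= s)%N -> (1 <= k)%N ->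
  (forall a, (a < p)%N -> tk s (D (E a a.+1))) ->
  tk k A -> tk (k + s - 1) (D A).
Proof.
move=> hs hk Hs hA.
rewrite (matrix_sum_delta A) der_sum => [|i _]; last first.
  by apply: tk_sum => j _; exact: tk_term hA.
apply: tk_sum => i _; rewrite der_sum => [|j _]; last exact: tk_term hA.
apply: tk_sum => j _.
case: (ltnP j (i + k)) => h.
  by rewrite hA // scale0r der0; exact: tk0.
have -> : delta_mx i j = E i j by rewrite /E !inord_val.
rewrite derZ; last by apply: tkE; have := ltn_ord j; lia.
apply: tkZ; apply: tkW (der_tkE hs Hs _); have := ltn_ord j; lia.
Qed.

Lemma der_low : (forall a, (a < p)%N -> D (E a a.+1) (inord a) (inord a.+1) = 0) ->
  forall a, (a < p)%N -> tk 2 (D (E a a.+1)).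
Proof.
move=> H a ha i j hij.
have h1 : tk 1 (D (E a a.+1)) by case: HD => _ H2 _; apply: H2; apply: tkE; lia.
case: (ltnP j (i + 1)) => hj; first exact: h1.
have hi : (i < p)%N by have := ltn_ord j; lia.
have ej : j = inord i.+1 :> 'I_n by apply: val_inj; rewrite /= inordK; lia.
rewrite ej -{1}(inord_val i).
case: (eqVneq (val i) a) => [<-|hne]; first by apply: H.
by apply: der_super.
Qed.

End Der.

End Tn.


Lemma rank_sumsmx (K : fieldType) (m : nat) (I : finType) (P : pred I) (A_ : I -> 'M[K]_m) :
  (\rank (\sum_(i | P i) A_ i)%MS <= \sum_(i | P i) \rank (A_ i))%N.
Proof.
elim/big_rec2: _ => [|i S s Pi hs]; first by rewrite mxrank0.
apply: leq_trans (mxrank_adds_leqif _ _).1 _; exact: leq_add.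
Qed.

Lemma count_inner (N' i : nat) : (\sum_(j < N' | (i + 1 <= j)%N) 1 = N' - i.+1)%N.
Proof.
rewrite big_mkcond /=; elim: N' => [|N' IH]; first by rewrite big_ord0.
rewrite big_ord_recr /= IH; case: ifP => h; lia.
Qed.

Lemma count_pairs (N' : nat) : (\sum_(i < N') \sum_(j < N' | (i + 1 <= j)%N) 1 = 'C(N', 2))%N.
Proof.
under eq_bigr => i _ do rewrite count_inner.
elim: N' => [|N' IH]; first by rewrite big_ord0.
rewrite big_ord_recl /= binS bin1 -IH.
rewrite subSS subn0 addnC; congr (_ + _)%N.
Qed.

Section Upper.
Variable K : fieldType.
Variable p : nat.
Local Notation n := p.+1.
Local Notation M := 'M[K]_n.
Hypothesis p3 : (3 <= p)%N.
Hypothesis two : (2 : K) != 0.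
Variable m : nat.
Variable br : 'rV[K]_m -> 'rV[K]_m -> 'rV[K]_m.
Variable N : 'M[K]_m.
Hypothesis Hbr : is_lie_bracket br.
Hypothesis Hsol : lie_solvable br.
Hypothesis Hnil : is_nilradical br N.
Variable phi : M -> 'rV[K]_m.
Hypothesis Hlin : forall (a : K) A B, strict_upper A -> strict_upper B ->
           phi (a *: A + B) = a *: phi A + phi B.
Hypothesis Hinj : forall A B, strict_upper A -> strict_upper B -> phi A = phi B -> A = B.
Hypothesis HinN : forall A, strict_upper A -> (phi A <= N)%MS.
Hypothesis Hsurj : forall v, (v <= N)%MS -> exists2 A, strict_upper A & phi A = v.
Hypothesis Hhom : forall A B, strict_upper A -> strict_upper B ->
           phi (mx_comm A B) = br (phi A) (phi B).

Lemma Hlin' a A B : tk 1 A -> tk 1 B -> phi (a *: A + B) = a *: phi A + phi B.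
Proof. by move=> hA hB; apply: Hlin; apply/tk1P. Qed.
Lemma Hinj' A B : tk 1 A -> tk 1 B -> phi A = phi B -> A = B.
Proof. by move=> hA hB; apply: Hinj; apply/tk1P. Qed.
Lemma HinN' A : tk 1 A -> (phi A <= N)%MS.
Proof. by move=> hA; apply: HinN; apply/tk1P. Qed.
Lemma Hsurj' v : (v <= N)%MS -> exists2 A, tk 1 A & phi A = v.
Proof. by move=> hv; case: (Hsurj hv) => A hA <-; exists A => //; apply/tk1P. Qed.
Lemma Hhom' A B : tk 1 A -> tk 1 B -> phi (mx_comm A B) = br (phi A) (phi B).
Proof. by move=> hA hB; apply: Hhom; apply/tk1P. Qed.

Lemma phi0 : phi 0 = 0.
Proof.
have h : tk 1 (0 : M) by exact: tk0.
by have := Hlin' (-1) h h; rewrite scaler0 addr0 scaleN1r addNr.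
Qed.

Lemma phiZ c A : tk 1 A -> phi (c *: A) = c *: phi A.
Proof.
move=> h; have h0 : tk 1 (0 : M) by exact: tk0.
by have := Hlin' c h h0; rewrite !addr0 phi0 addr0.
Qed.

Lemma phiD A B : tk 1 A -> tk 1 B -> phi (A + B) = phi A + phi B.
Proof. by move=> hA hB; have := Hlin' 1 hA hB; rewrite !scale1r. Qed.

Lemma phi_sum (I : Type) (r : seq I) (P : pred I) (F : I -> M) :
  (forall i, P i -> tk 1 (F i)) -> phi (\sum_(i <- r | P i) F i) = \sum_(i <- r | P i) phi (F i).
Proof.
move=> H.
suff: tk 1 (\sum_(i <- r | P i) F i) /\ phi (\sum_(i <- r | P i) F i) = \sum_(i <- r | P i) phi (F i) by case.
elim/big_rec2: _ => [|i y1 y2 Pi [h1 h2]]; first by split; [exact: tk0 | exact: phi0].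
split; first by apply: tkD => //; apply: H.
by rewrite phiD ?h2 //; apply: H.
Qed.

Definition psi (v : 'rV[K]_m) : M :=
  epsilon (inhabits 0) (fun A => strict_upper A /\ phi A = v).

Lemma psiP v : (v <= N)%MS -> tk 1 (psi v) /\ phi (psi v) = v.
Proof.
move=> hv; have [h1 h2] := epsilon_spec (inhabits 0) (fun A => strict_upper A /\ phi A = v)
  ltac:(by case: (Hsurj hv) => A hA hA'; exists A).
by split => //; apply/tk1P.
Qed.

Lemma psi_phi A : tk 1 A -> psi (phi A) = A.
Proof.
move=> hA; have [h1 h2] := psiP (HinN' hA).
by apply: Hinj'.
Qed.

Lemma psi_lin c u v : (u <= N)%MS -> (v <= N)%MS -> psi (c *: u + v) = c *: psi u + psi v.
Proof.
move=> hu hv; have [h1 h2] := psiP hu; have [h3 h4] := psiP hv.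
have hZ : tk 1 (c *: psi u) by exact: tkZ.
by rewrite -{1}h2 -{1}h4 -phiZ // -phiD ?psi_phi //; apply: tkD.
Qed.

Lemma idealN : is_ideal br N.
Proof. by case: Hnil. Qed.

Definition Dx (x : 'rV[K]_m) (A : M) : M := psi (br x (phi A)).

Lemma phi_Dx x A : tk 1 A -> phi (Dx x A) = br x (phi A).
Proof. move=> hA; apply: (psiP _).2; apply: idealN; exact: HinN'. Qed.

Lemma Dx_tk1 x A : tk 1 A -> tk 1 (Dx x A).
Proof. move=> hA; apply: (psiP _).1; apply: idealN; exact: HinN'. Qed.

Lemma Dx_der x : is_der (Dx x).
Proof.
split.
- move=> c A B hA hB; rewrite /Dx.
  rewrite Hlin' // (br_linr Hbr x) psi_lin //; apply: idealN; exact: HinN'.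
- exact: Dx_tk1.
- move=> A B hA hB; apply: Hinj'.
  + by apply: Dx_tk1; rewrite -[1%N]/(1 + 0)%N; apply: tk_comm => //; apply: tkW hB.
  + apply: tkD; rewrite -[1%N]/(1 + 0)%N; apply: tk_comm; try exact: Dx_tk1; try done.
      exact: tkW hB.
    exact: tkW (Dx_tk1 _ hB).
  + have h1 := Dx_tk1 x hA; have h2 := Dx_tk1 x hB.
    have c1 : tk 1 (mx_comm A B) by rewrite -[1%N]/(1 + 0)%N; apply: tk_comm => //; apply: tkW hB.
    have c2 : tk 1 (mx_comm (Dx x A) B) by rewrite -[1%N]/(1 + 0)%N; apply: tk_comm => //; apply: tkW hB.
    have c3 : tk 1 (mx_comm A (Dx x B)) by rewrite -[1%N]/(1 + 0)%N; apply: tk_comm => //; apply: tkW h2.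
    by rewrite phi_Dx // phiD // !Hhom' // !phi_Dx // (br_der Hbr) addrC.
Qed.

Local Notation EE a b := (@E K p a b).

Lemma Dx_linx c x y A : tk 1 A -> Dx (c *: x + y) A = c *: Dx x A + Dx y A.
Proof.
move=> hA; rewrite /Dx (br_linl Hbr) psi_lin //; apply: idealN; exact: HinN'.
Qed.

Definition tau (x : 'rV[K]_m) : 'rV[K]_p :=
  \row_(a < p) Dx x (EE a a.+1) (inord a) (inord a.+1).

Lemma tau_lin a x y : tau (a *: x + y) = a *: tau x + tau y.
Proof.
apply/rowP => i; rewrite !mxE Dx_linx ?mxE //; apply: tkE; have := ltn_ord i; lia.
Qed.

Definition Tm : 'M[K]_(m, p) := \matrix_(i < m) tau (row i 1%:M).

Lemma TmE x : x *m Tm = tau x.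
Proof. exact: (FmE_gen tau_lin). Qed.

Definition Ek : 'M[K]_m := kermx Tm.

Lemma Dx_pres x k A : (1 <= k)%N -> tk k A -> tk k (Dx x A).
Proof.
move=> hk hA; have := @der_tk K p (Dx x) (Dx_der x) p3 two 1 k A (leqnn 1) hk.
rewrite addn1 subn1 /=; apply => // a ha; apply: Dx_tk1; apply: tkE; lia.
Qed.

Lemma Ek_low v k A : (v <= Ek)%MS -> (1 <= k)%N -> tk k A -> tk k.+1 (Dx v A).
Proof.
move=> hv hk hA.
have H0 : forall a, (a < p)%N -> Dx v (EE a a.+1) (inord a) (inord a.+1) = 0.
  move=> a ha; move: hv; rewrite /Ek sub_kermx TmE => /eqP /rowP /(_ (Ordinal ha)).
  by rewrite !mxE.
have := @der_tk K p (Dx v) (Dx_der v) p3 two 2 k A isT hk.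
rewrite addn2 subn1 /=; apply => //.
exact: (der_low (Dx_der v) p3 two H0).
Qed.

Lemma phiB A B : tk 1 A -> tk 1 B -> phi (A - B) = phi A - phi B.
Proof.
move=> hA hB; rewrite addrC -scaleN1r Hlin' // ?scaleN1r 1?addrC //.
Qed.

Lemma Dx_brk x y A : tk 1 A -> Dx (br x y) A = Dx x (Dx y A) - Dx y (Dx x A).
Proof.
move=> hA; have h1 := Dx_tk1 y hA; have h2 := Dx_tk1 x hA.
have h3 := Dx_tk1 x h1; have h4 := Dx_tk1 y h2.
apply: Hinj'; [exact: Dx_tk1 | exact: tkB | ].
rewrite phiB // !phi_Dx //.
have := br_der Hbr x y (phi A); move=> ->.
by rewrite addrC addKr.
Qed.

Lemma Ek_ideal : is_ideal br Ek.
Proof.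
move=> x y hy; rewrite /Ek sub_kermx TmE; apply/eqP/rowP => a.
have ha := ltn_ord a.
have hE : tk 1 (EE a a.+1) by apply: tkE; lia.
rewrite !mxE Dx_brk // entB.
have t1 : tk 2 (Dx x (Dx y (EE a a.+1))) by apply: Dx_pres => //; exact: Ek_low hy _ hE.
have t2 : tk 2 (Dx y (Dx x (EE a a.+1))) by apply: Ek_low hy _ _ => //; exact: Dx_tk1.
by rewrite t1 ?t2 ?subr0 // !inordK; lia.
Qed.

Definition Fk (k : nat) : 'M[K]_m :=
  (\sum_(i : 'I_n) \sum_(j : 'I_n | (i + k <= j)%N) <<phi (delta_mx i j)>>)%MS.

Lemma Fk_in k A : (1 <= k)%N -> tk k A -> (phi A <= Fk k)%MS.
Proof.
move=> hk hA.
rewrite (matrix_sum_delta A) phi_sum => [|i _]; last first.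
  by apply: tk_sum => j _; exact: tk_term hA.
apply: summx_sub => i _; rewrite phi_sum => [|j _]; last exact: tk_term hA.
apply: summx_sub => j _.
case: (ltnP j (i + k)) => h.
  by rewrite hA // scale0r phi0 sub0mx.
have hd : tk 1 (delta_mx i j : M).
  have -> : delta_mx i j = EE i j by rewrite /E !inord_val.
  apply: tkE; have := ltn_ord j; lia.
rewrite phiZ // scalemx_sub //.
apply: (sumsmx_sup i) => //; apply: (sumsmx_sup j) => //.
by rewrite genmxE.
Qed.

Lemma Fk_gen k f (C : 'M[K]_m) : linf f ->
  (forall i j : 'I_n, (i + k <= j)%N -> (f (phi (delta_mx i j)) <= C)%MS) ->
  forall w, (w <= Fk k)%MS -> (f w <= C)%MS.
Proof.
move=> hf H; apply: preim_sub => //.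
apply/sumsmx_subP => i _; apply/sumsmx_subP => j hij.
by rewrite genmxE preimP // H.
Qed.

Lemma Fk_big k (w : 'rV[K]_m) : (n <= k)%N -> (w <= Fk k)%MS -> w = 0.
Proof.
move=> hk hw; apply: (@submx0null _ _ m).
have := @Fk_gen k (fun u => u) 0 _ _ w hw; apply.
  by move=> a x y.
by move=> i j hij; exfalso; have := ltn_ord j; lia.
Qed.

Lemma N_Fk1 (v : 'rV[K]_m) : (v <= N)%MS -> (v <= Fk 1)%MS.
Proof. by move=> hv; case: (Hsurj' hv) => B hB <-; exact: Fk_in. Qed.

Lemma nil_G (J : 'M[K]_m) : is_ideal br J -> (J <= Ek)%MS -> (brk br J J <= N)%MS -> (J <= N)%MS.
Proof.
move=> HJ JE JJ.
set G := (J + N)%MS.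
have HG : is_ideal br G := ideal_adds Hbr HJ idealN.
have Ga : forall u k w, (u <= G)%MS -> (1 <= k)%N -> (w <= Fk k)%MS -> (br u w <= Fk k.+1)%MS.
  move=> u k w hu hk hw; apply: (@Fk_gen k (br u) _ (br_linr Hbr u) _ w hw) => i j hij.
  have hd : tk k (delta_mx i j : M).
    have -> : delta_mx i j = EE i j by rewrite /E !inord_val.
    by apply: tkE; have := ltn_ord j; lia.
  have hd1 : tk 1 (delta_mx i j : M) by apply: tkW hd.
  apply: (preim_sub (br_linl Hbr (phi (delta_mx i j)))) hu.
  rewrite addsmx_sub; apply/andP; split; apply: to_preim (br_linl Hbr _) _ => u' hu'.
    rewrite -phi_Dx //; apply: Fk_in => //; apply: Ek_low => //.
    exact: submx_trans JE.
  case: (Hsurj' hu') => B hB <-; rewrite -Hhom' //; apply: Fk_in => //.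
  by rewrite -add1n; apply: tk_comm.
have Gb : (brk br G G <= Fk 1)%MS.
  apply: brk_sub => u v hu hv.
  apply: (preim_sub (br_linl Hbr v)) hu.
  rewrite addsmx_sub; apply/andP; split; apply: to_preim (br_linl Hbr v) _ => u' hu'.
    apply: (preim_sub (br_linr Hbr u')) hv.
    rewrite addsmx_sub; apply/andP; split; apply: to_preim (br_linr Hbr u') _ => v' hv'.
      by apply: N_Fk1; apply: submx_trans JJ; apply: brk_in.
    by apply: N_Fk1; apply: idealN.
  rewrite (br_anti Hbr) -scaleN1r scalemx_sub //; apply: N_Fk1; exact: idealN.
have Gc : forall k, (lower_central br G k.+1 <= Fk k.+1)%MS.
  elim=> [|k IH]; first exact: Gb.
  change (lower_central br G k.+2) with (brk br G (lower_central br G k.+1)).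
  apply: brk_sub => u w hu hw; apply: Ga => //; exact: submx_trans IH.
have Gnil : sub_nilpotent br G.
  exists p.+1; apply/eqP; rewrite mxrank_eq0; apply/eqP/row_matrixP => i.
  by rewrite row0; apply: (@Fk_big p.+1) => //; exact: submx_trans (row_sub i _) (Gc p).
case: Hnil => _ _ Hmax.
exact: submx_trans (addsmxSl J N) (Hmax G HG Gnil (addsmxSr J N)).
Qed.

Lemma derived_ideal j : is_ideal br (derived br Ek j).
Proof.
elim: j => [|j IH]; first exact: Ek_ideal.
change (is_ideal br (brk br (derived br Ek j) (derived br Ek j))).
exact: (ideal_brk Hbr IH).
Qed.

Lemma derived_sub j : (derived br Ek j <= Ek)%MS.
Proof.
elim: j => [|j IH]; first exact: submx_refl.
change (brk br (derived br Ek j) (derived br Ek j) <= Ek)%MS.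
exact: (submx_trans (ideal_brk_sub (@derived_ideal j)) IH).
Qed.

Lemma derived_le1 j : (derived br Ek j <= derived br (1%:M : 'M[K]_m) j)%MS.
Proof.
elim: j => [|j IH]; first exact: submx1.
change (brk br (derived br Ek j) (derived br Ek j) <= brk br (derived br 1%:M j) (derived br 1%:M j))%MS.
exact: brk_mono.
Qed.

Lemma Ek_N : (Ek <= N)%MS.
Proof.
case: Hsol => J0 hJ0.
have H0 : (derived br Ek J0 <= N)%MS.
  apply: submx_trans (derived_le1 J0) _.
  by move/eqP: hJ0; rewrite mxrank_eq0 => /eqP ->; exact: sub0mx.
suff: forall d, (derived br Ek (J0 - d) <= N)%MS by move/(_ J0); rewrite subnn.
elim=> [|d IH]; first by rewrite subn0.
case: (leqP J0 d) => h.
  by have -> : (J0 - d.+1 = J0 - d)%N by lia.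
have e : (J0 - d = (J0 - d.+1).+1)%N by lia.
rewrite e in IH; apply: nil_G; [exact: (@derived_ideal _) | exact: derived_sub | exact: IH].
Qed.

Lemma upper_main : (m - (n * (n - 1)) %/ 2 <= n - 1)%N.
Proof.
have h1 : (\rank Ek <= \rank N)%N := mxrankS Ek_N.
have NF : (N <= Fk 1)%MS by apply/row_subP => i; apply: N_Fk1; exact: row_sub.
have h2 : (\rank N <= 'C(n, 2))%N.
  apply: leq_trans (mxrankS NF) _.
  apply: leq_trans (rank_sumsmx _ _) _; rewrite -count_pairs.
  apply: leq_sum => i _; apply: leq_trans (rank_sumsmx _ _) _.
  by apply: leq_sum => j _; rewrite genmxE rank_leq_row.
have h3 : \rank Ek = (m - \rank Tm)%N := mxrank_ker Tm.
have h4 : (\rank Tm <= p)%N := rank_leq_col Tm.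
have e : 'C(n, 2) = ((n * (n - 1)) %/ 2)%N by rewrite bin2 subn1 divn2.
rewrite -e; lia.
Qed.

End Upper.


Section Exist.
Variable K : fieldType.
Variable p : nat.
Hypothesis p0 : (0 < p)%N.
Local Notation n := p.+1.
Local Notation M := 'M[K]_n.

Definition Q : {set 'I_n * 'I_n} := [set q : 'I_n * 'I_n | (q.1 <= q.2)%N && (q.1 < p)%N].

Lemma q0Q : ((ord0, ord0) : 'I_n * 'I_n) \in Q.
Proof. by rewrite inE /= p0. Qed.

Local Notation m := #|Q|.

Definition ev (k : 'I_m) : 'I_n * 'I_n := enum_val k.
Definition er (q : 'I_n * 'I_n) : 'I_m := enum_rank_in q0Q q.

Lemma evQ k : ev k \in Q.
Proof. exact: enum_valP. Qed.

Lemma erK q : q \in Q -> ev (er q) = q.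
Proof. exact: enum_rankK_in. Qed.

Lemma evK k : er (ev k) = k.
Proof. exact: enum_valK_in. Qed.

Definition psiE (x : 'rV[K]_m) : M :=
  \matrix_(i, j) if (i, j) \in Q then x 0 (er (i, j)) else 0.

Definition chi (A : M) : 'rV[K]_m := \row_k A (ev k).1 (ev k).2.

Definition supp (A : M) := forall i j, (i, j) \notin Q -> A i j = 0.

Lemma chiK x : chi (psiE x) = x.
Proof. by apply/rowP => k; rewrite !mxE -surjective_pairing evQ evK. Qed.

Lemma psiE_supp x : supp (psiE x).
Proof. by move=> i j h; rewrite mxE (negbTE h). Qed.

Lemma psiK A : supp A -> psiE (chi A) = A.
Proof.
move=> hA; apply/matrixP => i j; rewrite mxE.
case: ifP => h; last by rewrite hA // h.
by rewrite mxE erK.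
Qed.

Lemma chi_lin c A B : chi (c *: A + B) = c *: chi A + chi B.
Proof. by apply/rowP => k; rewrite !mxE. Qed.

Lemma chiD A B : chi (A + B) = chi A + chi B.
Proof. by apply/rowP => k; rewrite !mxE. Qed.

Lemma psiE_lin c x y : psiE (c *: x + y) = c *: psiE x + psiE y.
Proof.
apply/matrixP => i j; rewrite !mxE; case: ifP => _ //.
by rewrite mulr0 addr0.
Qed.

Lemma comm_linl c (A B C : M) : mx_comm (c *: A + B) C = c *: mx_comm A C + mx_comm B C.
Proof.
rewrite /mx_comm mulmxDl mulmxDr -scalemxAl -scalemxAr scalerBr.
by rewrite opprD addrACA.
Qed.

Lemma comm_linr c (A B C : M) : mx_comm C (c *: A + B) = c *: mx_comm C A + mx_comm C B.
Proof.
rewrite /mx_comm mulmxDl mulmxDr -scalemxAl -scalemxAr scalerBr.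
by rewrite opprD addrACA.
Qed.

Lemma jac_aux (V : zmodType) (a b c d e f : V) :
  a - b - (c - d) + (c - e - (f - b)) + (f - d - (a - e)) = 0.
Proof.
rewrite !opprB !addrA !subrK (addrAC _ (- e)) (addrAC (a - b) d b) subrK.
by rewrite (addrAC (a + d) (- e) (- d)) addrK subrK subrr.
Qed.

Lemma mx_jac (X Y Z : M) :
  mx_comm X (mx_comm Y Z) + mx_comm Y (mx_comm Z X) + mx_comm Z (mx_comm X Y) = 0.
Proof.
rewrite /mx_comm !mulmxBr !mulmxBl !mulmxA.
exact: jac_aux.
Qed.

Lemma comm_diag (A B : M) i : tk 0 A -> tk 0 B -> mx_comm A B i i = 0.
Proof.
move=> hA hB.
have H : forall (C D : M), tk 0 C -> tk 0 D -> (C *m D) i i = C i i * D i i.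
  move=> C D hC hD; rewrite mxE (bigD1 i) //= big1 ?addr0 // => l hl.
  case: (ltnP l i) => h; first by rewrite hC ?mul0r //; lia.
  rewrite hD ?mulr0 //; have : (l : nat) != i by []; lia.
by rewrite entB !H // mulrC subrr.
Qed.

Lemma supp_tk0 A : supp A -> tk 0 A.
Proof. by move=> hA i j h; apply: hA; rewrite inE /=; lia. Qed.

Lemma supp_comm A B : supp A -> supp B -> supp (mx_comm A B).
Proof.
move=> hA hB i j; rewrite inE /= negb_and -leqNgt -ltnNge => h.
have hj := ltn_ord j; have hi := ltn_ord i.
case: (ltnP j i) => h1; first by apply: (tk_comm (supp_tk0 hA) (supp_tk0 hB)); lia.
have e : i = j by apply: val_inj; rewrite /=; lia.
by rewrite e comm_diag //; apply: supp_tk0.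
Qed.

Definition brE (x y : 'rV[K]_m) : 'rV[K]_m := chi (mx_comm (psiE x) (psiE y)).

Lemma psiE_br x y : psiE (brE x y) = mx_comm (psiE x) (psiE y).
Proof. by rewrite psiK //; apply: supp_comm; apply: psiE_supp. Qed.

Lemma brE_lie : is_lie_bracket brE.
Proof.
split.
- by move=> a x y z; rewrite /brE psiE_lin comm_linl chi_lin.
- by move=> a x y z; rewrite /brE psiE_lin comm_linr chi_lin.
- by move=> x; rewrite /brE /mx_comm subrr; apply/rowP => k; rewrite !mxE.
- move=> x y z; rewrite /brE !psiE_br -!chiD mx_jac.
  by apply/rowP => k; rewrite !mxE.
Qed.

Definition Dg (P : pred 'I_m) : 'M[K]_m := \matrix_(k, l) if (k == l) && P k then 1 else 0.

Lemma mulDg (P : pred 'I_m) (w : 'rV[K]_m) k : (w *m Dg P) 0 k = if P k then w 0 k else 0.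
Proof.
rewrite mxE (bigD1 k) //= big1 => [|l hl]; last by rewrite mxE (negbTE hl) mulr0.
by rewrite mxE eqxx /= addr0; case: (P k); rewrite ?mulr1 ?mulr0.
Qed.

Lemma DgP (P : pred 'I_m) (v : 'rV[K]_m) : (v <= Dg P)%MS <-> (forall k, ~~ P k -> v 0 k = 0).
Proof.
split.
  move=> hv k hk; rewrite -(mulmxKpV hv) mulDg (negbTE hk) //.
move=> H; have -> : v = v *m Dg P.
  by apply/rowP => k; rewrite mulDg; case: ifP => // h; rewrite H // h.
exact: submxMl.
Qed.

Definition Gk (k : nat) : 'M[K]_m := Dg (fun l => ((ev l).1 + k <= (ev l).2)%N).

Lemma GkP k (v : 'rV[K]_m) : (v <= Gk k)%MS <-> tk k (psiE v).
Proof.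
rewrite DgP; split.
  move=> H i j h; rewrite mxE; case: ifP => // hq.
  by apply: H; rewrite erK //= -ltnNge.
move=> H l hl; have := H (ev l).1 (ev l).2; rewrite mxE -surjective_pairing evQ evK.
by apply; rewrite ltnNge.
Qed.

Lemma GkW a b (v : 'rV[K]_m) : (a <= b)%N -> (v <= Gk b)%MS -> (v <= Gk a)%MS.
Proof. by move=> hab /GkP h; apply/GkP; apply: tkW h. Qed.

Lemma Gk_br a b (u v : 'rV[K]_m) : (u <= Gk a)%MS -> (v <= Gk b)%MS -> (brE u v <= Gk (a + b))%MS.
Proof. by move=> /GkP hu /GkP hv; apply/GkP; rewrite psiE_br; apply: tk_comm. Qed.

Lemma brE_N x y : (brE x y <= Gk 1)%MS.
Proof.
apply/GkP; rewrite psiE_br => i j h.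
have h0 := supp_tk0 (psiE_supp x); have h1 := supp_tk0 (psiE_supp y).
case: (ltnP j i) => h2; first by apply: (tk_comm h0 h1); lia.
have e : i = j by apply: ord_inj; lia.
by rewrite e comm_diag.
Qed.

Lemma Gk_big k (v : 'rV[K]_m) : (n <= k)%N -> (v <= Gk k)%MS -> v = 0.
Proof.
move=> hk /DgP H; apply/rowP => l; rewrite mxE; apply: H.
by have := ltn_ord (ev l).2; lia.
Qed.

Lemma rank0_Gk k (A : 'M[K]_m) : (n <= k)%N -> (A <= Gk k)%MS -> \rank A = 0%N.
Proof.
move=> hk hA; apply/eqP; rewrite mxrank_eq0; apply/eqP/row_matrixP => i.
by rewrite row0; apply: (Gk_big hk); exact: submx_trans (row_sub i _) hA.
Qed.

Local Notation NE := (Gk 1).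

Lemma solvE : lie_solvable brE.
Proof.
have H : forall j, (derived brE (1%:M : 'M[K]_m) j.+1 <= Gk j.+1)%MS.
  elim=> [|j IH].
    by apply: brk_sub => u v _ _; exact: brE_N.
  change (brk brE (derived brE 1%:M j.+1) (derived brE 1%:M j.+1) <= Gk j.+2)%MS.
  apply: brk_sub => u v hu hv; apply: (@GkW _ (j.+1 + j.+1)); first lia.
  by apply: Gk_br; exact: submx_trans IH.
by exists p.+1; apply: (rank0_Gk (leqnn _)); exact: H.
Qed.

Lemma idealE : is_ideal brE NE.
Proof. by move=> x y _; exact: brE_N. Qed.

Lemma nilE : sub_nilpotent brE NE.
Proof.
have H : forall j, (lower_central brE NE j <= Gk j.+1)%MS.
  elim=> [|j IH]; first exact: submx_refl.
  change (brk brE NE (lower_central brE NE j) <= Gk j.+2)%MS.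
  apply: brk_sub => u v hu hv.
  exact: (Gk_br hu (submx_trans hv IH)).
by exists p; apply: (rank0_Gk (leqnn _)); exact: H.
Qed.

Lemma su_supp A : strict_upper A -> supp A.
Proof.
move=> hA i j; rewrite inE /= negb_and -leqNgt -ltnNge => h.
apply: hA; have := ltn_ord j; have := ltn_ord i; lia.
Qed.

Lemma isoE : iso_to_T p.+1 brE NE.
Proof.
exists chi; split.
- by move=> a A B _ _; exact: chi_lin.
- by move=> A B hA hB e; rewrite -(psiK (su_supp hA)) e psiK //; apply: su_supp.
- by move=> A hA; apply/GkP; rewrite psiK; [exact/tk1P | apply: su_supp].
- move=> v /GkP hv; exists (psiE v); last exact: chiK.
  exact/tk1P.
- by move=> A B hA hB; rewrite /brE !psiK //; apply: su_supp.
Qed.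

Lemma mul_entry1 (A B : M) i j l :
  (forall l', l' != l -> A i l' * B l' j = 0) -> (A *m B) i j = A i l * B l j.
Proof. by move=> H; rewrite mxE (bigD1 l) //= big1 ?addr0 // => l' hl; apply: H. Qed.

Lemma psiE0 : psiE 0 = 0.
Proof. by apply/matrixP => i j; rewrite !mxE; case: ifP. Qed.

Lemma maxE (J : 'M[K]_m) : is_ideal brE J -> sub_nilpotent brE J -> (NE <= J)%MS -> (J <= NE)%MS.
Proof.
move=> HJ [K0 hK0] NJ; apply/row_subP => r.
have vJ : (row r J <= J)%MS := row_sub r J.
move: vJ; set v := row r J => vJ.
set V := psiE v.
have V0 : tk 0 V := supp_tk0 (psiE_supp v).
have Vp : V (inord p) (inord p) = 0.
  by apply: psiE_supp; rewrite inE /= inordK //; lia.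
case: (boolP [exists i : 'I_p, V (inord i) (inord i) != V (inord i.+1) (inord i.+1)]); last first.
  move=> /existsPn Hall; apply/DgP => l hl.
  have Hd : forall t, (t <= p)%N -> V (inord (p - t)) (inord (p - t)) = 0.
    elim=> [|t IH] ht; first by rewrite subn0.
    have ht' : (p - t.+1 < p)%N by lia.
    have := Hall (Ordinal ht'); rewrite negbK /= => /eqP ->.
    by rewrite (_ : (p - t.+1).+1 = p - t)%N; [apply: IH; lia | lia].
  have hQ := evQ l; move: hQ hl; rewrite inE => /andP [h1 h2] hl.
  have e2 : (ev l).2 = (ev l).1 by apply: ord_inj; lia.
  have := Hd (p - (ev l).1)%N ltac:(lia).
  rewrite (_ : (p - (p - (ev l).1))%N = (ev l).1); last lia.
  have eq : ((ev l).1, (ev l).1) = ev l by move: e2; case: (ev l) => a b /= ->.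
  by rewrite inord_val /V mxE eq evQ evK.
case/existsP => i hi.
set c := V (inord i) (inord i) - V (inord i.+1) (inord i.+1).
have hc : c != 0 by rewrite subr_eq0.
have hi1 := ltn_ord i.
pose e := chi (E K p i i.+1).
have Esu : tk 1 (E K p i i.+1) by apply: tkE; lia.
have eN : (e <= NE)%MS by apply/GkP; rewrite psiK //; apply: su_supp; exact/tk1P.
pose w := fun k => iter k (brE v) e.
have Hw : forall k, [/\ (w k <= lower_central brE J k)%MS, (w k <= NE)%MS &
            psiE (w k) (inord i) (inord i.+1) = c ^+ k].
  elim=> [|k [IH1 IH2 IH3]].
    split => //; first exact: submx_trans NJ.
    by rewrite /w /= psiK; [rewrite /E mxE !eqxx expr0 | apply: su_supp; exact/tk1P].
  split.
  - change (brE v (w k) <= brk brE J (lower_central brE J k))%MS.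
    exact: (brk_in brE_lie vJ IH1).
  - exact: brE_N.
  have W1 : tk 1 (psiE (w k)) by apply/GkP.
  change (psiE (brE v (w k)) (inord i) (inord i.+1) = c ^+ k.+1).
  rewrite psiE_br entB (@mul_entry1 _ _ _ _ (inord i)); last first.
    move=> l hl; case: (ltnP l i) => h.
      by rewrite V0 ?mul0r // inordK //; lia.
    rewrite W1 ?mulr0 // !inordK //; have : (l : nat) != i by rewrite -(inordK (n':=p) (m:=i)) ?(inj_eq val_inj) //; lia.
    lia.
  rewrite (@mul_entry1 _ _ _ _ (inord i.+1)); last first.
    move=> l hl; case: (ltnP l i.+1) => h.
      by rewrite W1 ?mul0r // !inordK //; lia.
    rewrite V0 ?mulr0 // !inordK //; have : (l : nat) != i.+1.
      by apply/eqP => el; move: hl; rewrite -el inord_val eqxx.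
    lia.
  by rewrite IH3 exprS /c; ring.
have [h1 _ h3] := Hw K0.
have : w K0 = 0.
  apply: (@submx0null _ _ m); move/eqP: hK0; rewrite mxrank_eq0 => /eqP <-.
  exact: h1.
move=> h0; move: h3; rewrite h0 psiE0 mxE => /esym /eqP.
by rewrite (negbTE (expf_neq0 _ hc)).
Qed.

Lemma count_ge (N' i : nat) : (\sum_(j < N') (if (i <= j)%N then 1 else 0) = N' - i)%N.
Proof.
elim: N' => [|N' IH]; first by rewrite big_ord0.
rewrite big_ord_recr /= IH; case: ifP => h; lia.
Qed.

Lemma sum_tri (P : nat) : (\sum_(i < P) (P.+1 - i) = 'C(P.+1, 2) + P)%N.
Proof.
elim: P => [|P IH]; first by rewrite big_ord0.
rewrite big_ord_recl /=.
rewrite (eq_bigr (fun i : 'I_P => P.+1 - i)%N); last by move=> i _; rewrite /bump /=; lia.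
rewrite IH (binS P.+1 1) bin1; lia.
Qed.

Lemma cardQ : #|Q| = ('C(n, 2) + p)%N.
Proof.
rewrite -sum1_card big_mkcond /=.
rewrite (eq_bigr (fun q : 'I_n * 'I_n => if (q.1, q.2) \in Q then 1 else 0)%N); last first.
  by case.
rewrite -(pair_big xpredT xpredT (fun i j => if (i, j) \in Q then 1 else 0)%N) /=.
rewrite big_ord_recr /=.
rewrite (eq_bigr (fun i : 'I_p => (p.+1 - i)%N)); last first.
  move=> i _; rewrite (eq_bigr (fun j : 'I_n => if (i <= j)%N then 1 else 0)%N).
    by rewrite count_ge.
  by move=> j _; rewrite inE /= ltn_ord andbT.
rewrite sum_tri big1 ?addn0 // => j _; rewrite inE /= ltnn andbF //.
Qed.

End Exist.

Import Num.Theory.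


Lemma max_f_gen (K : fieldType) (n : nat) : (4 <= n)%N -> (2 : K) != 0 -> max_f_statement K n.
Proof.
case: n => [//|p] hn two.
have p3 : (2 < p)%N by lia.
have p0 : (0 < p)%N by lia.
split.
  move=> m br N Hbr Hsol Hnil [phi [h1 h2 h3 h4 h5]].
  exact: (upper_main p3 two Hbr Hsol Hnil h1 h2 h3 h4 h5).
exists #|Q p|, (brE p0), (Gk K p 1); split.
- exact: brE_lie.
- exact: solvE.
- split; [exact: idealE | exact: nilE | exact: maxE].
- exact: isoE.
- have e : 'C(p.+1, 2) = ((p.+1 * (p.+1 - 1)) %/ 2)%N by rewrite bin2 subn1 divn2.
  rewrite cardQ // e; lia.
Qed.

Theorem lemma2 (R : realType) (n : nat) :
  (4 <= n)%N -> max_f_statement R n /\ max_f_statement (R[i])%C n.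
Proof.
move=> hn; split; apply: max_f_gen => //; by rewrite pnatr_eq0.
Qed.
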